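(* Let $G,H$ be finite groups and $f:G\to H$ an identity preserving function such that $[G,G;f]$ is abelian and $n=[G:\mathrm{Stab}_G(f)]$ is relatively prime to $|[G,G;f]|$. Let $a_1,\dots,a_n$ be representatives of the right cosets of $\mathrm{Stab}_G(f)$ in $G$ and let $m$ be an integer with $mn\equiv 1\pmod{|[G,G;f]|}$. Then the distributed average $$\overline{\overline f}(x)=f(x)\Bigl(\prod_{i=1}^n[a_i,x;f]\Bigr)^m$$ is a group homomorphism from $G$ to $H$.
   Context: For $f:G\to H$ and $a\in G$, $f^a(x)=f(a)^{-1}f(ax)$; $f$ is identity preserving if $f(1)=1$. $\mathrm{Stab}_G(f)=\{a\in G: f^a=f\}$ (a subgroup of $G$). The $f$-distributor is $[x,y;f]=f(y)^{-1}f(x)^{-1}f(xy)=f(y)^{-1}f^x(y)$, and $[G,G;f]=\langle [x,y;f]: x,y\in G\rangle$. *)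

(* Defs.v *)
From HB Require Import structures.
From mathcomp Require Import all_boot all_order all_algebra all_fingroup.
Set Implicit Arguments. Unset Strict Implicit. Unset Printing Implicit Defensive.

Local Open Scope group_scope.

Section Distributors.
Variables (gT hT : finGroupType) (f : gT -> hT).

Definition fshift (a : gT) (x : gT) : hT := (f a)^-1 * f (a * x).

Definition id_preserving : Prop := f 1 = 1.

Definition fstab : {set gT} := [set a : gT | [forall x, fshift a x == f x]].

Definition distr (x y : gT) : hT := (f y)^-1 * (f x)^-1 * f (x * y).

Definition distr_group : {set hT} :=
  <<[set distr xy.1 xy.2 | xy in [set: gT * gT]]>>.

End Distributors.

Definition zexpg (T : finGroupType) (x : T) (m : int) : T :=
  match m with
  | Posz k => x ^+ k
  | Negz k => (x ^+ k.+1)^-1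
  end.

(* Main.v *)
Require Import Defs.
From HB Require Import structures.
From mathcomp Require Import all_boot all_order all_algebra all_fingroup.
From mathcomp Require Import cyclic.
Set Implicit Arguments. Unset Strict Implicit. Unset Printing Implicit Defensive.
Local Open Scope group_scope.

Lemma prod_perm_comm (G : finGroupType) (I : eqType) (F : I -> G) (r1 r2 : seq I) :
  (forall i j, commute (F i) (F j)) -> perm_eq r1 r2 ->
  \prod_(i <- r1) F i = \prod_(i <- r2) F i.
Proof.
move=> cF; elim: r1 r2 => [|x r1 IH] r2 pe.
  by move: (perm_size pe) => /= /esym/size0nil ->.
have xr2 : x \in r2 by rewrite -(perm_mem pe) mem_head.
case/splitPr: r2 / xr2 pe => p1 p2 pe.
have pe' : perm_eq r1 (p1 ++ p2).
  by rewrite -(perm_cons x); apply: (perm_trans pe); rewrite -cat1s perm_catCA.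
rewrite big_cons (IH _ pe') !big_cat big_cons /= !mulgA; congr (_ * _).
by apply: commute_prod => i _; apply: cF.
Qed.

Lemma prod_inj_comm (G : finGroupType) (I : finType) (s : I -> I) (F : I -> G) :
  (forall i j, commute (F i) (F j)) -> injective s ->
  \prod_i F (s i) = \prod_i F i.
Proof.
move=> cF si; rewrite -(big_map s xpredT F); apply: prod_perm_comm => //.
apply: uniq_perm; rewrite ?map_inj_uniq ?index_enum_uniq //.
move=> j; rewrite mem_index_enum; have [t st ts] := injF_bij si.
by rewrite -(ts j) map_f // mem_index_enum.
Qed.

Lemma zexpgM (G : finGroupType) (x y : G) m : commute x y ->
  zexpg (x * y) m = zexpg x m * zexpg y m.
Proof.
move=> cxy; case: m => k /=; rewrite expgMn //.
by rewrite (commuteX2 _ _ cxy) invMg.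
Qed.

Lemma zexpgJ (G : finGroupType) (x g : G) m : (zexpg x m) ^ g = zexpg (x ^ g) m.
Proof. by case: m => k /=; rewrite ?conjVg conjXg. Qed.

Lemma zexpg_inv (G : finGroupType) (D : {group G}) (x : G) (n : nat) (m : int) :
  x \in D -> (m * n%:Z = 1 %[mod (#|D|)%:Z])%Z -> zexpg (x ^+ n) m = x.
Proof.
move=> xD; have xd := expg_cardG xD; case: m => k /= h.
  rewrite -PoszM !modz_nat in h; case: h => h.
  by rewrite -expgM -(expg_mod _ xd) mulnC h expg_mod.
have h0 : ((k.+1 * n + 1) %% #|D| = 0)%N.
  suff : (((k.+1 * n + 1)%N %% #|D|)%Z = 0%Z) by rewrite modz_nat => -[].
  rewrite PoszD -modzDmr -h NegzE GRing.mulNr -PoszM modzDmr.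
  by rewrite GRing.subrr mod0z.
have : x ^+ (k.+1 * n + 1) = 1 by rewrite -(expg_mod _ xd) h0.
rewrite expgD expg1 -expgM mulnC => e.
by rewrite -[x ^+ _](mulgK x) e mul1g invgK.
Qed.

Theorem mainTheorem12 (gT hT : finGroupType) (f : gT -> hT)
  (n : nat) (a : 'I_n -> gT) (m : int) :
  id_preserving f ->
  abelian (distr_group f) ->
  n = #|[set: gT] : fstab f|%g ->
  coprime n #|distr_group f| ->
  injective (fun i => (fstab f :* a i)%g) ->
  [set (fstab f :* a i)%g | i : 'I_n] = rcosets (fstab f) [set: gT] ->
  (m * n%:Z = 1 %[mod (#|distr_group f|)%:Z])%Z ->
  {morph (fun x => (f x * zexpg (\prod_(i < n) distr f (a i) x) m)%g)
    : x y / (x * y)%g}.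
Proof.
move=> f1 abD _ _ Hinj Himg Hm x y /=.
set S := fstab f.
pose DG : {group hT} := (<<[set distr f xy.1 xy.2 | xy in [set: gT * gT]]>>)%G.
have eD : distr_group f = DG by [].
rewrite eD in abD Hm; set D := DG.
have dD : forall u v, distr f u v \in D.
  move=> u v; apply: mem_gen.
  exact: (imset_f (fun xy => distr f xy.1 xy.2) (in_setT (u, v))).
have cD : forall u v, u \in D -> v \in D -> commute u v.
  by move=> u v uD vD; apply: (centsP abD u uD v vD).
have F1 : forall s z, s \in S -> f (s * z) = f s * f z.
  move=> s z; rewrite inE => /forallP /(_ z) /eqP; rewrite /fshift => e.
  by rewrite -e mulKVg.
have S1 : 1 \in S.
  by rewrite inE; apply/forallP => z; rewrite /fshift f1 invg1 mul1g mul1g.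
have F2 : forall s u z, s \in S -> distr f (s * u) z = distr f u z.
  move=> s u z sS; rewrite /distr -(mulgA s u z) (F1 s (u * z)) // (F1 s u) //.
  by rewrite invMg !mulgA mulgKV.
have F3 : forall u v w, (distr f u v) ^ (f w) * distr f (u * v) w
                      = distr f v w * distr f u (v * w).
  move=> u v w; rewrite /distr conjgE (mulgA u v w) !mulgA.
  by rewrite !mulgK.
have cjD : forall u v w, (distr f u v) ^ (f w) \in D.
  move=> u v w; rewrite -(mulgK (distr f (u * v) w) (_ ^ _)) F3.
  by apply: groupM; [apply: groupM | rewrite groupV]; apply: dD.
have Hsig : forall z i, exists j, S :* a j = S :* (a i * z).
  move=> z i; have : S :* (a i * z) \in rcosets S [set: gT].
    by apply/rcosetsP; exists (a i * z); rewrite ?inE.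
  by rewrite -Himg => /imsetP [j _ e]; exists j.
pose sg z i := odflt i [pick j | S :* a j == S :* (a i * z)].
have sgP : forall z i, S :* a (sg z i) = S :* (a i * z).
  move=> z i; rewrite /sg; case: pickP => [j /eqP //|no].
  by case: (Hsig z i) => j e; move: (no j); rewrite e eqxx.
have sginj : forall z, injective (sg z).
  move=> z i i' e; apply: Hinj => /=.
  have := sgP z i; rewrite e sgP => /(congr1 (fun C => C :* z^-1)).
  by rewrite -!rcosetM -!mulgA mulgV !mulg1 => ->.
pose P z := \prod_(i < n) distr f (a i) z.
have L1 : forall z w, \prod_(i < n) distr f (a i * z) w = P w.
  move=> z w; rewrite (eq_bigr (fun i => distr f (a (sg z i)) w)) => [|i _].
    by apply: prod_inj_comm (sginj z) => i j; apply: cD.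
  have : a i * z \in S :* a (sg z i).
    by rewrite sgP; apply/rcosetP; exists 1; rewrite ?mul1g.
  by case/rcosetP => s sS ->; rewrite F2.
have PD : forall z, P z \in D by move=> z; apply: group_prod.
have E : (P x) ^ (f y) * P y = (distr f x y) ^+ n * P (x * y).
  have : \prod_(i < n) ((distr f (a i) x) ^ (f y) * distr f (a i * x) y)
       = \prod_(i < n) (distr f x y * distr f (a i) (x * y)).
    by apply: eq_bigr => i _; apply: F3.
  rewrite (@prodgM_commute _ _ _ _ (fun i => distr f (a i) x ^ f y)
            (fun i => distr f (a i * x) y)); last first.
    by move=> i j _ _; apply: cD; rewrite ?dD ?cjD.
  rewrite (@prodgM_commute _ _ _ _ (fun i => distr f x y)
            (fun i => distr f (a i) (x * y))); last first.
    by move=> i j _ _; apply: cD; rewrite ?dD ?cjD.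
  rewrite L1 big_const_ord iter_mulg_1 => <-; congr (_ * _).
  by rewrite (big_morph (conjg^~ (f y)) (fun u v => conjMg u v (f y)) (conj1g (f y))).
have fxy : f (x * y) = f x * f y * distr f x y.
  by rewrite /distr !mulgA mulgK mulgV mul1g.
rewrite fxy -/(P x) -/(P y) -/(P (x * y)).
have PJD : P x ^ f y \in D.
  rewrite -(mulgK (P y) (P x ^ f y)) E.
  by rewrite !groupM ?groupV ?groupX ?PD ?dD.
rewrite [in RHS](mulgA _ (f y)) -[in RHS](mulgA (f x) (zexpg (P x) m)).
rewrite [in RHS](conjgC (zexpg (P x) m) (f y)) zexpgJ -[in RHS]mulgA -[in RHS]mulgA.
rewrite -[in LHS]mulgA -[in LHS]mulgA; congr (_ * (_ * _)).
rewrite -zexpgM; last by apply: cD; rewrite ?PD.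
rewrite E zexpgM; last by apply: cD; rewrite ?PD ?groupX ?dD.
by rewrite (zexpg_inv (dD x y) Hm).
Qed.
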